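(* For all integers $k\geq 2$ and $i\geq 2k+3$, and all integers $j\geq k+2$, $$R_k^{\mathcal{BIP}}(i,j)=\begin{cases}2j-1-k, & \text{if } k+2\leq j\leq 2k,\\ 2j-1, & \text{if } j\geq 2k+1,\end{cases}$$ where $\mathcal{BIP}$ is the class of bipartite graphs.
   Context: All graphs are finite and simple. For a graph $G$ and a nonnegative integer $k$, a $k$-sparse $j$-set is a set of $j$ vertices of $G$ inducing a subgraph of maximum degree at most $k$; a $k$-dense $i$-set is a set of $i$ vertices of $G$ that is $k$-sparse in the complement of $G$. For a graph class $\mathcal{G}$, $R_k^{\mathcal{G}}(i,j)$ is the smallest natural number $n$ such that every graph on $n$ vertices in $\mathcal{G}$ has either a $k$-dense $i$-set or a $k$-sparse $j$-set. *)

(* Defs.v *)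
From mathcomp Require Import all_boot.
Set Implicit Arguments. Unset Strict Implicit. Unset Printing Implicit Defensive.

Definition simple_graph (T : finType) (e : rel T) : Prop :=
  (forall x, ~~ e x x) /\ (forall x y, e x y = e y x).

Definition bipartite (T : finType) (e : rel T) : Prop :=
  exists c : T -> bool, forall x y, e x y -> c x != c y.

Definition compl_graph (T : finType) (e : rel T) : rel T :=
  fun x y => (x != y) && ~~ e x y.

Definition max_deg_le (T : finType) (e : rel T) (k : nat) (S : {set T}) : bool :=
  [forall x in S, #|[set y in S | e x y]| <= k].

Definition k_sparse_set (T : finType) (e : rel T) (k j : nat) (S : {set T}) : bool :=
  (#|S| == j) && max_deg_le e k S.

Definition k_dense_set (T : finType) (e : rel T) (k i : nat) (S : {set T}) : bool :=
  k_sparse_set (compl_graph e) k i S.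

Definition ramsey_prop_BIP (k i j n : nat) : Prop :=
  forall e : rel 'I_n, simple_graph e -> bipartite e ->
    (exists S : {set 'I_n}, k_dense_set e k i S) \/
    (exists S : {set 'I_n}, k_sparse_set e k j S).

Definition is_R_BIP (k i j r : nat) : Prop :=
  ramsey_prop_BIP k i j r /\ (forall n, ramsey_prop_BIP k i j n -> r <= n).

(* Main.v *)
Require Import Defs.
From mathcomp Require Import all_boot zify.
Set Implicit Arguments. Unset Strict Implicit. Unset Printing Implicit Defensive.

Lemma count_iota_lt p n : count (fun x => x < p) (iota 0 n) = minn p n.
Proof.
elim: n => [|n IH]; first by rewrite minn0.
rewrite -addn1 iotaD count_cat IH /= add0n addn0.
case: (ltnP n p) => H; lia.
Qed.

Lemma card_lt p n : #|[set x : 'I_n | x < p]| = minn p n.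
Proof.
rewrite cardsE cardE -(count_iota_lt p n) -val_enum_ord count_map -size_filter.
rewrite -deprecated_filter_index_enum enumT !unlock.
congr size. rewrite /index_enum !unlock /=. apply: eq_filter => x /=. by [].
Qed.

Lemma pick_sub (T : finType) (A : {set T}) m :
  m <= #|A| -> exists B : {set T}, B \subset A /\ #|B| = m.
Proof.
elim: m => [|m IH] H; first by exists set0; rewrite sub0set cards0.
have [B [BA cB]] := IH (ltnW H).
have : 0 < #|A :\: B|.
  by rewrite cardsD (setIidPr BA) cB subn_gt0.
case/card_gt0P => x; rewrite inE => /andP [xB xA].
exists (x |: B); split.
  by rewrite subUset sub1set xA BA.
by rewrite cardsU1 xB cB.
Qed.

Lemma sparse_of (T : finType) (e : rel T) (c : T -> bool)
  (hc : forall x y, e x y -> c x != c y) (S : {set T}) k :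
  (forall x, x \in S -> #|[set y in S | c y != c x]| <= k) -> max_deg_le e k S.
Proof.
move=> H; apply/forallP => x; apply/implyP => xS.
apply: leq_trans (H x xS); apply: subset_leq_card; apply/subsetP => y.
rewrite !inE => /andP [yS exy]; rewrite yS /= eq_sym; exact: hc.
Qed.

Lemma no_dense (T : finType) (e : rel T) (c : T -> bool)
  (hc : forall x y, e x y -> c x != c y) (S : {set T}) k :
  2 * k + 3 <= #|S| -> ~~ max_deg_le (compl_graph e) k S.
Proof.
move=> HS; apply/negP => Hd.
have Hsplit := cardsID [set x | c x] S.
have [b Hb] : exists b, k + 2 <= #|[set y in S | c y == b]|.
  case: (leqP (k + 2) #|S :&: [set x | c x]|) => H.
    exists true; apply: leq_trans H _; apply: subset_leq_card.
    by apply/subsetP => y; rewrite !inE => /andP [-> ->].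
  exists false; have H2 : k + 2 <= #|S :\: [set x | c x]| by lia.
  apply: leq_trans H2 _; apply: subset_leq_card.
  by apply/subsetP => y; rewrite !inE => /andP [/negbTE -> ->].
have : 0 < #|[set y in S | c y == b]| by lia.
case/card_gt0P => x; rewrite inE => /andP [xS /eqP cx].
move/forallP: Hd => /(_ x) /implyP /(_ xS) Hk.
have Hsub : [set y in S | c y == b] :\ x \subset [set y in S | compl_graph e x y].
  apply/subsetP => y; rewrite !inE => /andP [yx /andP [yS /eqP cy]].
  rewrite yS /compl_graph eq_sym yx /=; apply/negP => exy.
  by move: (hc _ _ exy); rewrite cx cy eqxx.
have := subset_leq_card Hsub.
have := cardsD1 x [set y in S | c y == b].
rewrite !inE xS cx eqxx /=. lia.
Qed.

Lemma upper (k i j n : nat) :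
  2 * k + 3 <= i ->
  (forall p q, p + q = n -> exists a b, [/\ a <= p, b <= q, a + b = j,
      (0 < a -> b <= k) & (0 < b -> a <= k)]) ->
  ramsey_prop_BIP k i j n.
Proof.
move=> Hi Hab e [Hirr Hsym] [c hc]; right.
set A := [set x : 'I_n | c x].
have HpQ : #|A| + #|~: A| = n by rewrite cardsC card_ord.
have [a [b [Ha Hb Hj Hka Hkb]]] := Hab _ _ HpQ.
have [SA [SAA cSA]] := pick_sub Ha.
have [SB [SBB cSB]] := pick_sub Hb.
have disj : #|SA :&: SB| = 0.
  apply/eqP; rewrite cards_eq0; apply/eqP/setP => y; rewrite !inE.
  apply/negP => /andP [/(subsetP SAA) yA /(subsetP SBB)].
  by rewrite inE yA.
exists (SA :|: SB); rewrite /k_sparse_set cardsU disj cSA cSB subn0 Hj eqxx /=.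
apply: (sparse_of hc) => x; rewrite inE => /orP [] xS.
- have xA : c x by have := subsetP SAA x xS; rewrite inE.
  have pa : 0 < a by rewrite -cSA; apply/card_gt0P; exists x.
  apply: leq_trans (Hka pa); rewrite -cSB; apply: subset_leq_card; apply/subsetP => y.
  rewrite !inE xA => /andP [/orP [] yS cy].
    by move: (subsetP SAA y yS) cy; rewrite inE => ->.
  done.
- have xA : ~~ c x by have := subsetP SBB x xS; rewrite !inE.
  have pb : 0 < b by rewrite -cSB; apply/card_gt0P; exists x.
  apply: leq_trans (Hkb pb); rewrite -cSA; apply: subset_leq_card; apply/subsetP => y.
  rewrite !inE (negbTE xA) => /andP [/orP [] yS cy].
    done.
  by move: (subsetP SBB y yS) cy; rewrite !inE => /negbTE ->.
Qed.

Lemma lower (k i j n : nat) :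
  2 * k + 3 <= i -> 1 <= j ->
  (forall a b, a + b = j -> a <= minn (j.-1) n -> b <= n - minn (j.-1) n ->
     (0 < a -> b <= k) -> (0 < b -> a <= k) -> False) ->
  ~ ramsey_prop_BIP k i j n.
Proof.
move=> Hi Hj1 Hab Hr.
pose c := fun x : 'I_n => x < j.-1.
pose e := fun x y : 'I_n => c x != c y.
have hc : forall x y, e x y -> c x != c y by [].
have sg : simple_graph e by split => [x|x y]; rewrite /e ?eqxx // eq_sym.
case: (Hr e sg (ex_intro _ c hc)) => [[S /andP [/eqP cS HS]] | [S /andP [/eqP cS HS]]].
  by move: (no_dense hc (leq_trans Hi (eq_leq (esym cS)))) ; rewrite HS.
set A := [set x : 'I_n | x < j.-1].
have HA : #|A| = minn j.-1 n := card_lt j.-1 n.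
have HC : #|A| + #|~: A| = n by rewrite cardsC card_ord.
have Hsplit := cardsID A S.
apply: (Hab #|S :&: A| #|S :\: A|).
- by rewrite Hsplit.
- rewrite -HA; apply: subset_leq_card; exact: subsetIr.
- have : #|S :\: A| <= #|~: A|.
    by apply: subset_leq_card; rewrite setDE subsetIr.
  rewrite -HA; lia.
- case/card_gt0P => x; rewrite !inE => /andP [xS xA].
  move/forallP: HS => /(_ x) /implyP /(_ xS) Hk.
  apply: leq_trans Hk; apply: subset_leq_card; apply/subsetP => y.
  by rewrite !inE /e /c xA => /andP [yA ->].
- case/card_gt0P => x; rewrite !inE => /andP [xA xS].
  move/forallP: HS => /(_ x) /implyP /(_ xS) Hk.
  apply: leq_trans Hk; apply: subset_leq_card; apply/subsetP => y.
  by rewrite !inE /e /c (negbTE xA) => /andP [-> ->].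
Qed.

Theorem theorem5p5 (k i j : nat) :
  2 <= k -> 2 * k + 3 <= i -> k + 2 <= j ->
  is_R_BIP k i j (if j <= 2 * k then 2 * j - 1 - k else 2 * j - 1).
Proof.
move=> Hk Hi Hj; split.
- apply: (upper Hi) => p q Hpq.
  case: (leqP j p) => Hp.
    by exists j, 0; split => //; lia.
  case: (leqP j q) => Hq.
    by exists 0, j; split => //; lia.
  exists (minn k p), (j - minn k p).
  move: Hpq; case: ifP => Hc Hpq; split; lia.
- move=> n Hn; case: (leqP (if j <= 2 * k then 2 * j - 1 - k else 2 * j - 1) n) => // Hlt.
  exfalso; apply: (lower Hi _ _ Hn); first by lia.
  move=> a b Hab Ha Hb Hka Hkb; move: Hlt; case: ifP => Hc Hlt; lia.
Qed.
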